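(* Let $X$ be a shift space such that $s_n(X)\le k$ for all $n\ge0$. Then the number of right asymptotic classes of $X$ is finite and at most $k$.
   Context: $A$ is a finite alphabet; a shift space is a closed shift-invariant subset $X\subseteq A^{\mathbb Z}$; $p_n(X)$ is the number of words of length $n$ occurring as factors of elements of $X$, and $s_n(X)=p_{n+1}(X)-p_n(X)$. For $x\in A^{\mathbb Z}$ write $x^+=x_0x_1\cdots$. Two elements $x,y\in X$ are right asymptotically equivalent if there are shifts $x'=\sigma^i(x)$, $y'=\sigma^j(y)$ with $x'^+=y'^+$ (i.e. they have a common tail). Each equivalence class is a union of orbits; the right asymptotic classes are the equivalence classes which contain more than one orbit. *)

(* Defs.v *)
From HB Require Import structures.
From mathcomp Require Import all_boot all_order all_algebra.
From Stdlib Require Import ClassicalEpsilon.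
Set Implicit Arguments. Unset Strict Implicit. Unset Printing Implicit Defensive.
Import Order.TTheory GRing.Theory Num.Theory.
Local Open Scope ring_scope.

Definition point (A : finType) := int -> A.

Definition subshift_pred (A : finType) := point A -> Prop.

Definition shift (A : finType) (x : point A) : point A := fun m => x (m + 1).

Definition shift_invariant (A : finType) (X : subshift_pred A) : Prop :=
  (forall x, X x -> X (shift x)) /\ (forall y, X y -> exists x, X x /\ shift x = y).

(* Closedness in the product topology: every point all of whose central
   windows [-n, n] agree with some point of X lies in X. *)
Definition closed_set (A : finType) (X : subshift_pred A) : Prop :=
  forall x : point A,
    (forall n : nat, exists y, X y /\
        forall m : int, - (n%:Z) <= m -> m <= n%:Z -> x m = y m) -> X x.

Definition is_shift_space (A : finType) (X : subshift_pred A) : Prop :=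
  closed_set X /\ shift_invariant X.

Definition occurs (A : finType) (X : subshift_pred A) (n : nat) (w : n.-tuple A) : Prop :=
  exists x, X x /\ exists i : int, forall j : 'I_n, tnth w j = x (i + (j : nat)%:Z).

Definition asbool (P : Prop) : bool :=
  if excluded_middle_informative P then true else false.

Definition complexity (A : finType) (X : subshift_pred A) (n : nat) : nat :=
  #|[set w : n.-tuple A | asbool (occurs X w)]|.

Definition right_asymptotic (A : finType) (x y : point A) : Prop :=
  exists i j : int, forall m : nat, x (i + m%:Z) = y (j + m%:Z).

Definition same_orbit (A : finType) (x y : point A) : Prop :=
  exists i : int, forall m : int, y m = x (m + i).

Definition class_has_several_orbits (A : finType) (X : subshift_pred A) (x : point A) : Prop :=
  exists y, X y /\ right_asymptotic x y /\ ~ same_orbit x y.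

(* Main.v *)
Require Import Defs.
From HB Require Import structures.
From mathcomp Require Import all_boot all_order all_algebra.
From mathcomp Require Import zify.
From Stdlib Require Import Classical ClassicalEpsilon.
Set Implicit Arguments. Unset Strict Implicit. Unset Printing Implicit Defensive.
Import Order.TTheory GRing.Theory Num.Theory.
Local Open Scope ring_scope.

Lemma asboolP (P : Prop) : asbool P = true <-> P.
Proof. rewrite /asbool; case: excluded_middle_informative => //; split => //. Qed.

Lemma occurs_cons (A : finType) (X : subshift_pred A) (n : nat) (c : A)
  (v : n.-tuple A) (x : point A) (i0 : int) :
  X x -> x (i0 - 1) = c -> (forall j : 'I_n, tnth v j = x (i0 + (j : nat)%:Z)) ->
  occurs X (cons_tuple c v).
Proof.
move=> Xx Hc Hv; exists x; split => //; exists (i0 - 1).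
case=> [[|j] Hj]; rewrite (tnth_nth c) /=.
  by rewrite addr0 Hc.
have Hj' : (j < n)%N by [].
have := Hv (Ordinal Hj'); rewrite (tnth_nth c) /= => ->.
congr x; lia.
Qed.

Lemma left_special (A : finType) (x y : point A) :
  right_asymptotic x y -> ~ same_orbit x y ->
  exists p q : int, (forall t : nat, x (p + t%:Z) = y (q + t%:Z)) /\ x (p - 1) != y (q - 1).
Proof.
move=> [a [b H]] Hno.
pose P := fun d : nat => x (a - d%:Z - 1) != y (b - d%:Z - 1).
have exP : exists d, P d.
  apply: NNPP => Hn; apply: Hno; exists (a - b) => m.
  have -> : m = b + (m - b) by lia.
  case: (m - b) => [n|n].
    by have -> : b + n%:Z + (a - b) = a + n%:Z by lia.
  have : ~~ P n by apply/negP => Pn; apply: Hn; exists n.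
  rewrite negbK => /eqP E.
  have -> : b + Negz n = b - n%:Z - 1 by rewrite NegzE; lia.
  have -> : b - n%:Z - 1 + (a - b) = a - n%:Z - 1 by lia.
  by rewrite E.
case: (ex_minnP exP) => d Pd Hmin.
exists (a - d%:Z), (b - d%:Z); split; last first.
  by [].
move=> t.
case: (ltnP t d) => Htd.
  have He : ~~ P (d - t.+1)%N by apply/negP => Pe; have := Hmin _ Pe; lia.
  move: He; rewrite negbK => /eqP E.
  have -> : a - d%:Z + t%:Z = a - (d - t.+1)%N%:Z - 1 by lia.
  have -> : b - d%:Z + t%:Z = b - (d - t.+1)%N%:Z - 1 by lia.
  exact: E.
have -> : a - d%:Z + t%:Z = a + (t - d)%N%:Z by lia.
have -> : b - d%:Z + t%:Z = b + (t - d)%N%:Z by lia.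
exact: H.
Qed.

Definition wt (A : Type) (u : nat -> A) (N : nat) : N.-tuple A :=
  @Tuple N A (mkseq u N) (introT eqP (size_mkseq u N)).

Lemma tnth_wt (A : Type) (u : nat -> A) N (j : 'I_N) : tnth (wt u N) j = u j.
Proof. by rewrite (tnth_nth (u 0%N)) /= nth_mkseq. Qed.

Theorem mainTheorem4 (A : finType) (X : subshift_pred A) (k : nat) :
  is_shift_space X ->
  (forall n : nat, (complexity X n.+1 <= complexity X n + k)%N) ->
  forall (m : nat) (r : 'I_m -> point A),
    (forall i, X (r i) /\ class_has_several_orbits X (r i)) ->
    (forall i j, i != j -> ~ right_asymptotic (r i) (r j)) ->
    (m <= k)%N.
Proof.
move=> _ Hc m r Hr Hd.
have H1 : forall i, exists z : point A * int * int,
    X z.1.1 /\ (forall t : nat, r i (z.1.2 + t%:Z) = z.1.1 (z.2 + t%:Z)) /\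
    r i (z.1.2 - 1) != z.1.1 (z.2 - 1).
  move=> i; have [_ [y [Xy [Ha Hno]]]] := Hr i.
  have [p [q [Hpq Hne]]] := left_special Ha Hno.
  by exists (y, p, q).
pose f := fun i => proj1_sig (constructive_indefinite_description _ (H1 i)).
have Hf : forall i, X (f i).1.1 /\ (forall t : nat, r i ((f i).1.2 + t%:Z) = (f i).1.1 ((f i).2 + t%:Z)) /\
    r i ((f i).1.2 - 1) != (f i).1.1 ((f i).2 - 1).
  move=> i; exact: (proj2_sig (constructive_indefinite_description _ (H1 i))).
pose y := fun i => (f i).1.1.
pose p := fun i => (f i).1.2.
pose q := fun i => (f i).2.
pose u := fun i (t : nat) => r i (p i + t%:Z).
have Hdist : forall i j, i != j -> exists t, u i t != u j t.
  move=> i j ij; apply: NNPP => Hn; apply: (Hd i j ij).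
  exists (p i), (p j) => t; apply/eqP; apply/negPn/negP => Ht; apply: Hn; by exists t.
pose tt := fun i j => match excluded_middle_informative (exists t, u i t != u j t) with
  | left h => xchoose h | right _ => 0%N end.
have Htt : forall i j, i != j -> u i (tt i j) != u j (tt i j).
  move=> i j ij; rewrite /tt; case: excluded_middle_informative => [h|h].
    exact: (xchooseP h).
  by case: h; apply: Hdist.
pose N := ((\max_(ij : 'I_m * 'I_m) tt ij.1 ij.2)%N).+1.
have HN : forall i j, (tt i j < N)%N.
  move=> i j; rewrite ltnS; set F := (fun ij : 'I_m * 'I_m => tt ij.1 ij.2); have := @leq_bigmax _ F (i, j); exact.
pose w := fun i => wt (u i) N.
have winj : injective w.
  move=> i j Hw; apply/eqP; apply: contraT => ij.
  have := Htt i j ij.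
  have := congr1 (fun s : N.-tuple A => tnth s (Ordinal (HN i j))) Hw.
  by rewrite /= !tnth_wt => ->; rewrite eqxx.
pose B := [set t : N.+1.-tuple A | asbool (occurs X t)].
pose S := [set t : N.-tuple A | asbool (occurs X t)].
pose a := fun i => r i (p i - 1).
pose C := (fun i => cons_tuple (a i) (w i)) @: [set: 'I_m].
pose D := B :\: C.
have consinj : forall (c c' : A) (v v' : N.-tuple A), cons_tuple c v = cons_tuple c' v' -> c = c' /\ v = v'.
  move=> c c' v v' E; have := congr1 val E => /= [[-> E2]]; split => //; exact: val_inj.
have cardC : #|C| = m.
  rewrite card_imset ?cardsT ?card_ord // => i j /consinj [_]; exact: winj.
have wocc : forall i, occurs X (cons_tuple (a i) (w i)).
  move=> i; apply: (@occurs_cons _ _ _ _ _ (r i) (p i)) => //; first by case: (Hr i).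
  by move=> j; rewrite tnth_wt.
have CB : C \subset B.
  apply/subsetP => t /imsetP [i _ ->]; rewrite inE; apply/asboolP; exact: wocc.
have SD : S \subset (@behead_tuple N.+1 A) @: D.
  apply/subsetP => v; rewrite inE => /asboolP [x [Xx [i0 Hv]]].
  case: (boolP [exists i, v == w i]) => [/existsP [i /eqP Hvi]|Hno].
    apply/imsetP; exists (cons_tuple (y i ((f i).2 - 1)) (w i)); last first.
      by apply: val_inj; rewrite Hvi.
    rewrite !inE; apply/andP; split.
      apply/negP => /imsetP [j _ /consinj [E1 E2]].
      have ji : j = i by apply: winj.
      subst j; have [_ [_ Hne]] := Hf i; move: Hne; rewrite -/(y i) E1 /a eqxx //.
    apply/asboolP; apply: (@occurs_cons _ _ _ _ _ (y i) ((f i).2)) => //.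
      by case: (Hf i).
    move=> j; rewrite tnth_wt; have [_ [Ht _]] := Hf i; exact: Ht.
  apply/imsetP; exists (cons_tuple (x (i0 - 1)) v); last by apply: val_inj.
  rewrite !inE; apply/andP; split.
    apply/negP => /imsetP [j _ /consinj [_ E2]].
    by move: Hno; rewrite negb_exists => /forallP /(_ j); rewrite E2 eqxx.
  apply/asboolP; exact: (@occurs_cons _ _ _ _ _ x i0).
have le1 : (#|S| <= #|D|)%N.
  apply: leq_trans (subset_leq_card SD) _; exact: leq_imset_card.
have eqB : (#|C| + #|D| = #|B|)%N.
  by rewrite -(cardsID C B) (setIidPr CB).
have := Hc N; rewrite /complexity -/B -/S => HBS.
lia.
Qed.
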